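(* Let $N\ge 2$ and let $\mathbf{g}\in\mathbb{C}^N$ be a window such that, for $\ell=0$ and $\ell=1$, the DFT of the sequence $n\mapsto\mathbf{g}[n]\overline{\mathbf{g}[(n-\ell)\bmod N]}$ is non-vanishing. Then for every non-vanishing $\mathbf{x}\in\mathbb{C}^N$ (i.e. $\mathbf{x}[n]\neq0$ for all $n$), the algebraic algorithm described in the context, applied to $|\mathbf{X}[m,k]|^2$ (the STFT magnitude of $\mathbf{x}$ with $L=1$), outputs $e^{i\phi}\mathbf{x}$ for some $\phi\in\mathbb{R}$.
   Context: Signals and windows are indexed by $\{0,\dots,N-1\}$ and extended $N$-periodically (indices mod $N$). The STFT of $\mathbf{x}\in\mathbb{C}^N$ with window $\mathbf{g}$ and step $L=1$ is $\mathbf{X}[m,k]=\sum_{n=0}^{N-1}\mathbf{x}[n]\mathbf{g}[m-n]e^{-2\pi i kn/N}$, $m,k=0,\dots,N-1$. The DFT of $\mathbf{v}\in\mathbb{C}^N$ is $(\mathbf{F}\mathbf{v})[k]=\sum_n\mathbf{v}[n]e^{-2\pi i kn/N}$. Algebraic algorithm: given $\mathbf{Y}[m,k]=|\mathbf{X}[m,k]|^2$, (1) compute $\mathbf{Z}[m,\ell]=\sum_{k=0}^{N-1}\mathbf{Y}[m,k]e^{-2\pi i k\ell/N}$ and $\mathbf{z}_\ell=(\mathbf{Z}[m,\ell])_{m=0}^{N-1}$; (2) for $\ell=0,1$ compute $\mathbf{x}_\ell=\frac1N\mathbf{G}_\ell^{-1}\mathbf{z}_\ell$, where $\mathbf{G}_\ell$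 is the $N\times N$ circulant matrix with first column $(\mathbf{g}[m]\overline{\mathbf{g}[(m-\ell)\bmod N]})_{m=0}^{N-1}$ (inverted via its DFT diagonalization), and set $\hat{\mathbf{x}}[0]=\sqrt{\mathbf{x}_0[0]}$; (3) recursively for $n=0,\dots,N-2$ set $\hat{\mathbf{x}}[n+1]$ by $\overline{\hat{\mathbf{x}}[n+1]}=\mathbf{x}_1[n]/\hat{\mathbf{x}}[n]$; output $\hat{\mathbf{x}}$. *)

(* Defs.v *)
From mathcomp Require Import all_boot all_order all_algebra.
From mathcomp Require Import complex.
From mathcomp Require Import reals trigo.
Import GRing.Theory Num.Theory.
Set Implicit Arguments. Unset Strict Implicit. Unset Printing Implicit Defensive.
Local Open Scope ring_scope.
Local Open Scope complex_scope.

(* Signals in C^N are represented as functions nat -> R[i]; only the values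
   at 0..N-1 are meaningful, and all indices are reduced mod N. *)

Section STFTPR.
Variable R : realType.

Definition cexp (t : R) : R[i] := cos t +i* sin t.

Definition dftw (N j : nat) : R[i] := cexp (- (2 * pi * j%:R / N%:R)).

Definition dft (N : nat) (v : nat -> R[i]) (k : nat) : R[i] :=
  \sum_(n < N) v n * dftw N (k * n).

Definition idft (N : nat) (v : nat -> R[i]) (n : nat) : R[i] :=
  N%:R^-1 * \sum_(k < N) v k * (dftw N (k * n))^*.

(* (m - n) mod N, for n < N *)
Definition subm (N m n : nat) : nat := (m + N - n) %% N.

(* STFT with step L = 1: X[m,k] = sum_n x[n] g[m-n] e^{-2 pi i k n/N} *)
Definition stft (N : nat) (g x : nat -> R[i]) (m k : nat) : R[i] :=
  \sum_(n < N) x n * g (subm N m n) * dftw N (k * n).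

Definition stft_mag2 (N : nat) (g x : nat -> R[i]) (m k : nat) : R[i] :=
  stft N g x m k * (stft N g x m k)^*.

(* first column of G_l : m |-> g[m] conj(g[(m - l) mod N]) *)
Definition gcol (N : nat) (g : nat -> R[i]) (l m : nat) : R[i] :=
  g m * (g (subm N m l))^*.

Definition alg_Z (N : nat) (Y : nat -> nat -> R[i]) (m l : nat) : R[i] :=
  \sum_(k < N) Y m k * dftw N (k * l).

(* Step (2): x_l = (1/N) G_l^{-1} z_l, where the circulant G_l is inverted
   through its DFT diagonalisation: G_l^{-1} z = F^{-1}( F z / F c_l ). *)
Definition alg_xl (N : nat) (g : nat -> R[i]) (Y : nat -> nat -> R[i])
    (l : nat) (n : nat) : R[i] :=
  N%:R^-1 *
  idft N (fun k => dft N (fun m => alg_Z N Y m l) k / dft N (gcol N g l) k) n.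

Fixpoint alg_rec (x0 : R[i]) (x1 : nat -> R[i]) (n : nat) : R[i] :=
  match n with
  | 0 => sqrtc x0
  | n'.+1 => (x1 n' / alg_rec x0 x1 n')^*
  end.

Definition algebraic_alg (N : nat) (g : nat -> R[i]) (Y : nat -> nat -> R[i])
    (n : nat) : R[i] :=
  alg_rec (alg_xl N g Y 0 0) (alg_xl N g Y 1) n.

End STFTPR.

(* Main.v *)
Require Import Defs.
From mathcomp Require Import all_boot all_order all_algebra.
From mathcomp Require Import complex.
From mathcomp Require Import reals trigo.
From mathcomp Require Import ring lra.
Import Order.TTheory GRing.Theory Num.Theory.
Local Open Scope ring_scope.
Local Open Scope complex_scope.

Lemma cexpD (R : realType) (x y : R) : cexp (x + y) = cexp x * cexp y.
Proof. rewrite /cexp sinD cosD /=. simpc. congr (_ +i* _); ring. Qed.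

Lemma cexp0 (R : realType) : cexp (0:R) = 1.
Proof. by rewrite /cexp cos0 sin0. Qed.

Lemma cexpMn (R : realType) (x : R) (j : nat) : cexp (x * j%:R) = cexp x ^+ j.
Proof.
elim: j => [|j IH]; first by rewrite mulr0 cexp0.
by rewrite exprS -IH -cexpD -natr1 mulrDr mulr1 addrC.
Qed.

Lemma cexp_conj (R : realType) (x : R) : conjc (cexp x) = cexp (- x).
Proof. by rewrite /cexp cosN sinN. Qed.

Lemma cexp_norm (R : realType) (x : R) : cexp x * conjc (cexp x) = 1.
Proof. rewrite /cexp /=; simpc. rewrite -!expr2 sin2cos2 addrC subrK [sin x * _]mulrC addNr.
by []. Qed.

Lemma dftw_exp (R : realType) (N j : nat) : dftw R N j = dftw R N 1 ^+ j.
Proof.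
rewrite /dftw -cexpMn; congr cexp. rewrite mulr1; ring.
Qed.

Lemma dftw_N (R : realType) (N : nat) : (0 < N)%N -> dftw R N 1 ^+ N = 1.
Proof.
move=> N0; rewrite -dftw_exp /dftw /cexp.
have NN : (N%:R : R) != 0 by rewrite pnatr_eq0 -lt0n.
rewrite mulrK ?unitfE // cosN sinN mulr_natl cos2pi sin2pi oppr0.
by [].
Qed.

Lemma cos_eq1 (R : realType) (t : R) : 0 < t < pi *+ 2 -> cos t != 1.
Proof.
move=> /andP[t0 t2]; apply/eqP => ct.
have key : forall u : R, 0 <= u <= pi -> cos u = 1 -> u = 0.
  move=> u uI cu; have := @cosK R u; rewrite in_itv /= uI cu acos1 => h.
  by rewrite h.
case: (lerP t pi) => tp.
  by move: (key t); rewrite (ltW t0) tp ct => /(_ erefl erefl) t00; move: t0; rewrite t00 ltxx.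
have : cos (pi *+ 2 - t) = 1 by rewrite addrC cosD2pi cosN.
move/(key (pi *+ 2 - t)) => h.
have h2 : 0 <= pi *+ 2 - t <= pi.
  apply/andP; split; first by rewrite subr_ge0 ltW.
  by rewrite lerBlDr mulr2n lerD2l ltW.
by move: (h h2) => /eqP; rewrite subr_eq0 => /eqP e; move: t2; rewrite e ltxx.
Qed.

Lemma w_neq1 (R : realType) (N j : nat) : (0 < j < N)%N -> dftw R N 1 ^+ j != 1.
Proof.
move=> /andP[j0 jN]; rewrite -dftw_exp /dftw /cexp; apply/negP => /eqP [].
rewrite cosN => c _; move: c; apply/eqP/cos_eq1.
have N0 : (0 : R) < N%:R by rewrite ltr0n (ltn_trans j0 jN).
have p0 := @pi_gt0 R.
apply/andP; split.
  by rewrite divr_gt0 // mulr_gt0 // ?ltr0n // mulr_gt0.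
rewrite ltr_pdivrMr // -[pi *+ 2]mulr_natl.
have jN' : (j%:R : R) < N%:R by rewrite ltr_nat.
nra.
Qed.

Lemma w_mod (R : realType) (N a : nat) : (0 < N)%N ->
  dftw R N 1 ^+ a = dftw R N 1 ^+ (a %% N).
Proof.
move=> N0; rewrite {1}(divn_eq a N) exprD mulnC exprM dftw_N // expr1n mul1r.
by [].
Qed.

Lemma w_sum (R : realType) (N j : nat) : (0 < N)%N ->
  \sum_(k < N) dftw R N 1 ^+ (k * j) = if (N %| j)%N then N%:R else 0.
Proof.
move=> N0; set w := dftw R N 1.
under eq_bigr => k _ do rewrite mulnC exprM.
case: ifP => dv.
  rewrite w_mod // (eqP dv) expr0.
  by under eq_bigr => k _ do rewrite expr1n; rewrite sumr_const card_ord.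
set u := w ^+ j.
have u1 : u != 1.
  rewrite /u w_mod //; apply: w_neq1; rewrite ltn_pmod // andbT lt0n.
  by rewrite -/(dvdn N j) dv.
have uN : u ^+ N = 1 by rewrite /u -exprM mulnC exprM dftw_N // expr1n.
have : (u - 1) * \sum_(i < N) u ^+ i == 0 by rewrite -subrX1 uN subrr.
by rewrite mulf_eq0 subr_eq0 (negbTE u1) /= => /eqP.
Qed.

Lemma w_conj (R : realType) (N a : nat) : (0 < N)%N ->
  conjc (dftw R N 1 ^+ a) = dftw R N 1 ^+ (N.-1 * a).
Proof.
move=> N0; rewrite rmorphXn exprM; congr (_ ^+ _).
have w0 : dftw R N 1 != 0.
  apply/eqP => h; have := @cexp_norm R (- (2 * pi * 1%:R / N%:R)).
  by rewrite -/(dftw R N 1) h mul0r => /eqP; rewrite eq_sym oner_eq0.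
apply: (mulIf w0); rewrite -exprSr prednK // dftw_N //.
by rewrite mulrC cexp_norm.
Qed.

Lemma dvd_lem (N s b : nat) : (0 < N)%N -> (b < N)%N ->
  ((N %| s + N.-1 * b) = (b == s %% N))%N.
Proof.
move=> N0 bN; rewrite /dvdn.
have H : ((s + N.-1 * b + b) %% N = s %% N)%N.
  by rewrite -addnA -mulSnr prednK // mulnC addnC modnMDl.
have := eqn_modDr b (s + N.-1 * b) 0 N.
by rewrite add0n mod0n H (modn_small bN) eq_sym => <-.
Qed.

Lemma subm_lt (N a b : nat) : (0 < N)%N -> (subm N a b < N)%N.
Proof. by move=> N0; rewrite /subm ltn_pmod. Qed.

Lemma subm_spec (N a b : nat) : (b <= N)%N -> (subm N a b + b = a %[mod N])%N.
Proof.
move=> bN; rewrite /subm modnDml subnK; first by rewrite modnDr.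
exact: (leq_trans bN (leq_addl a N)).
Qed.

Lemma subm_uniq (N a b r : nat) : (r < N)%N -> (b <= N)%N ->
  (r + b = a %[mod N])%N -> subm N a b = r.
Proof.
move=> rN bN H; apply/eqP.
have N0 : (0 < N)%N by apply: leq_ltn_trans rN.
rewrite -(modn_small rN) -(modn_small (@subm_lt N a b N0)) -(eqn_modDr b).
by rewrite subm_spec // H.
Qed.

Lemma conjcM (R : realType) (a b : R[i]) : conjc (a * b) = conjc a * conjc b.
Proof. by case: a => a1 a2; case: b => b1 b2; simpc; congr (_ +i* _); ring. Qed.

Lemma pick_sum (R : realType) (N j : nat) (F : nat -> R[i]) : (j < N)%N ->
  \sum_(i < N) F i * (if (i == j :> nat) then N%:R else 0) = N%:R * F j.
Proof.
move=> jN; rewrite (bigD1 (Ordinal jN)) //= eqxx big1 ?addr0; first by rewrite mulrC.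
move=> i /negbTE ne; case: ifP => [/eqP e|_]; last by rewrite mulr0.
by move: ne; rewrite -val_eqE /= e eqxx.
Qed.


Lemma Zform (R : realType) (N : nat) (g x : nat -> R[i]) (m l : nat) : (0 < N)%N ->
  alg_Z N (stft_mag2 N g x) m l = N%:R * \sum_(n < N)
     x n * conjc (x ((n + l) %% N)%N) * (g (subm N m n) * conjc (g (subm N m ((n + l) %% N)))).
Proof.
move=> N0; rewrite /alg_Z /stft_mag2 /stft.
transitivity (\sum_(k < N) \sum_(n < N) \sum_(n' < N)
   (x n * g (subm N m n)) * conjc (x n' * g (subm N m n')) * dftw R N 1 ^+ (k * (n + l + N.-1 * n'))).
  apply: eq_bigr => k _. rewrite (raddf_sum (@conjc R)) /= mulr_suml mulr_suml.
  apply: eq_bigr => n _; rewrite mulr_sumr mulr_suml.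
  apply: eq_bigr => n' _.
  rewrite (dftw_exp R N (k * n)) (dftw_exp R N (k * n')) (dftw_exp R N (k * l)).
  rewrite !conjcM w_conj //.
  rewrite (_ : k * (n + l + N.-1 * n') = k * n + N.-1 * (k * n') + k * l)%N; last first.
    by rewrite !mulnDr mulnCA addnAC.
  rewrite !exprD; ring.
rewrite exchange_big /= mulr_sumr; apply: eq_bigr => n _.
rewrite exchange_big /=.
under eq_bigr => n' _ do rewrite -mulr_sumr w_sum // (@dvd_lem N _ _ N0 (ltn_ord n')).
rewrite (@pick_sum R N _ (fun i => x n * g (subm N m n) * conjc (x i * g (subm N m i)))); last by rewrite ltn_pmod.
rewrite conjcM; ring.
Qed.

Lemma subm_shift (N m n l : nat) : (0 < N)%N -> (n < N)%N -> (l <= N)%N ->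
  subm N m ((n + l) %% N)%N = subm N (subm N m n) l.
Proof.
move=> N0 nN lN; symmetry; apply: subm_uniq; first exact: subm_lt.
  exact: lN.
apply/eqP; rewrite -(eqn_modDr n) -addnA [(l + n)%N]addnC -modnDmr subm_spec.
  by rewrite subm_spec // ltnW.
by apply: ltnW; rewrite ltn_pmod.
Qed.

Lemma Zform2 (R : realType) (N : nat) (g x : nat -> R[i]) (m l : nat) : (0 < N)%N ->
  (l <= N)%N ->
  alg_Z N (stft_mag2 N g x) m l = N%:R * \sum_(n < N)
     (x n * conjc (x ((n + l) %% N)%N)) * gcol N g l (subm N m n).
Proof.
move=> N0 lN; rewrite Zform //; congr (_ * _); apply: eq_bigr => n _.
by rewrite /gcol subm_shift.
Qed.

Lemma shift_sum (R : realType) (N n k : nat) (c : nat -> R[i]) : (0 < N)%N -> (n < N)%N ->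
  \sum_(m < N) c (subm N m n) * dftw R N 1 ^+ (k * m) =
  dftw R N 1 ^+ (k * n) * \sum_(j < N) c j * dftw R N 1 ^+ (k * j).
Proof.
move=> N0 nN.
pose h := fun j : 'I_N => Ordinal (ltn_pmod (j + n) N0).
have hinj : injective h.
  move=> j1 j2 /(congr1 val) /= /eqP; rewrite eqn_modDr !modn_small // => /eqP e.
  exact: val_inj.
rewrite (reindex_inj hinj) /= mulr_sumr; apply: eq_bigr => j _.
rewrite (@subm_uniq N _ n j) //; last by rewrite modn_mod.
  rewrite w_mod // modnMmr -w_mod // mulnDr exprD; ring.
exact: ltnW.
Qed.

Lemma dft_conv (R : realType) (N k : nat) (y c : nat -> R[i]) : (0 < N)%N ->
  dft N (fun m => \sum_(n < N) y n * c (subm N m n)) k = dft N y k * dft N c k.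
Proof.
move=> N0; rewrite /dft.
under eq_bigr => m _ do rewrite (dftw_exp R N (k * m)) mulr_suml.
rewrite exchange_big /= mulr_suml; apply: eq_bigr => n _.
under eq_bigr => m _ do rewrite -mulrA.
rewrite -mulr_sumr shift_sum // (dftw_exp R N (k * n)).
rewrite mulrA; congr (_ * _); apply: eq_bigr => j _; by rewrite (dftw_exp R N (k * j)).
Qed.

Lemma dft_ext (R : realType) (N k : nat) (u v : nat -> R[i]) :
  (forall m, (m < N)%N -> u m = v m) -> dft N u k = dft N v k.
Proof. by move=> h; apply: eq_bigr => m _; rewrite h. Qed.

Lemma idft_ext (R : realType) (N n : nat) (u v : nat -> R[i]) :
  (forall m, (m < N)%N -> u m = v m) -> idft N u n = idft N v n.
Proof. by move=> h; rewrite /idft; congr (_ * _); apply: eq_bigr => m _; rewrite h. Qed.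

Lemma dft_scale (R : realType) (N k : nat) (a : R[i]) (u : nat -> R[i]) :
  dft N (fun m => a * u m) k = a * dft N u k.
Proof. by rewrite /dft mulr_sumr; apply: eq_bigr => m _; rewrite mulrA. Qed.

Lemma idft_scale (R : realType) (N k : nat) (a : R[i]) (u : nat -> R[i]) :
  idft N (fun m => a * u m) k = a * idft N u k.
Proof.
rewrite /idft mulrCA; congr (_ * _); rewrite mulr_sumr; apply: eq_bigr => m _; by rewrite mulrA.
Qed.

Lemma numconjE (R : realType) (z : R[i]) : Num.conj z = conjc z.
Proof. by []. Qed.

Lemma idft_dft (R : realType) (N n : nat) (y : nat -> R[i]) : (0 < N)%N -> (n < N)%N ->
  idft N (dft N y) n = y n.
Proof.
move=> N0 nN; rewrite /idft /dft.
transitivity (N%:R^-1 * \sum_(j < N) y j * \sum_(k < N) dftw R N 1 ^+ (k * (j + N.-1 * n))).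
  congr (_ * _); under eq_bigr => k _ do rewrite mulr_suml.
  rewrite exchange_big /=; apply: eq_bigr => j _; rewrite mulr_sumr; apply: eq_bigr => k _.
  rewrite (dftw_exp R N (k * j)) (dftw_exp R N (k * n)) numconjE w_conj // -mulrA -exprD.
  by rewrite mulnDr mulnCA.
under eq_bigr => j _ do rewrite w_sum // (@dvd_lem N _ _ N0 nN) modn_small // eq_sym.
rewrite (@pick_sum R N n y nN) mulKf //.
by rewrite pnatr_eq0 -lt0n.
Qed.

Lemma xl_val (R : realType) (N : nat) (g x : nat -> R[i]) (l n : nat) :
  (0 < N)%N -> (l <= N)%N -> (n < N)%N ->
  (forall k, (k < N)%N -> dft N (gcol N g l) k != 0) ->
  alg_xl N g (stft_mag2 N g x) l n = x n * conjc (x ((n + l) %% N)%N).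
Proof.
move=> N0 lN nN hg; rewrite /alg_xl.
set y := fun n => x n * conjc (x ((n + l) %% N)%N).
rewrite (@idft_ext R N n _ (fun k => N%:R * dft N y k)); last first.
  move=> k kN; rewrite (@dft_ext R N k _ (fun m => N%:R *
      \sum_(n < N) y n * gcol N g l (subm N m n))); last first.
    by move=> m _; rewrite Zform2.
  by rewrite dft_scale dft_conv // mulrA mulfK // hg.
rewrite idft_scale idft_dft // mulKf //.
by rewrite pnatr_eq0 -lt0n.
Qed.

Lemma unit_cexp (R : realType) (u : R[i]) : u * conjc u = 1 -> exists phi : R, cexp phi = u.
Proof.
case: u => a b /=; simpc => -[h _].
have h1 : 1 - a ^+ 2 = b ^+ 2 by rewrite -h; ring.
have ha : -1 <= a <= 1 by apply/andP; split; nra.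
have ca : cos (acos a) = a by rewrite acosK // in_itv /=.
have sa : sin (acos a) = `|b| by rewrite sin_acos // h1 sqrtr_sqr.
case: (lerP 0 b) => b0.
  by exists (acos a); rewrite /cexp ca sa ger0_norm.
by exists (- acos a); rewrite /cexp cosN sinN ca sa ltr0_norm // opprK.
Qed.

Theorem theorem2 (R : realType) (N : nat) (g : nat -> R[i]) :
  (2 <= N)%N ->
  (forall (l : nat), (l <= 1)%N ->
     forall k : nat, (k < N)%N -> dft N (gcol N g l) k != 0) ->
  forall x : nat -> R[i],
    (forall n : nat, (n < N)%N -> x n != 0) ->
    exists phi : R, forall n : nat, (n < N)%N ->
      algebraic_alg N g (stft_mag2 N g x) n = cexp phi * x n.
Proof.
move=> N2 hg x hx.
have N0 : (0 < N)%N by apply: leq_trans N2.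
have hx0 : x 0%N != 0 := hx 0%N N0.
set e := `|x 0%N| / x 0%N.
have he : e * conjc e = 1.
  rewrite -sqr_normc /e normf_div normr_id divff ?expr1n // normr_eq0 //.
have e0 : e != 0 by apply/eqP => e0; move: he; rewrite e0 mul0r => /eqP; rewrite eq_sym oner_eq0.
have ce : conjc e = e^-1 by apply: (mulfI e0); rewrite he divff.
have [phi hphi] := @unit_cexp R e he.
exists phi; rewrite hphi.
have x0v : alg_xl N g (stft_mag2 N g x) 0 0 = x 0%N * conjc (x 0%N).
  rewrite xl_val //; last exact: hg.
  by rewrite (_ : ((0 + 0) %% N = 0)%N) // mod0n.
have x1v : forall n, (n.+1 < N)%N -> alg_xl N g (stft_mag2 N g x) 1 n = x n * conjc (x n.+1).
  move=> n hn; rewrite xl_val //; first by rewrite addn1 modn_small.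
    exact: ltnW.
  exact: hg.
elim=> [|n IH] hn.
  by rewrite /algebraic_alg /= x0v -normcE /e divfK.
have := IH (ltnW hn); rewrite /algebraic_alg /= => ->.
rewrite x1v // ?numconjE.
have -> : x n * conjc (x n.+1) / (e * x n) = conjc (x n.+1) * conjc e.
  have xn0 : x n != 0 by apply: hx; exact: ltnW.
  by rewrite ce; field; rewrite e0 xn0.
by rewrite ?numconjE conjcM !conjcK mulrC.
Qed.
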